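(* Let $\mathbf{I}$ be a $d$-system of ideals in a ring $R$, $A:=\mathscr{A}(R,\mathbf{I})$, $B:=\mathscr{A}(R^{\mathrm{op}},\mathring{\mathbf{I}})$, and identify $A$ and $B$ with their (faithful) images in $\mathrm{End}_{\mathbb{Z}}(\mathbb{T})$. Then $\mathrm{End}_A(\mathbb{T})=B$ and $\mathrm{End}_B(\mathbb{T})=A$.
   Context: A $d$-system of ideals in $R$ is a collection $\{I_{ij}\mid1\le i,j\le d+1\}$ of two-sided ideals with $I_{ij}I_{jk}\subset I_{ik}$ and $I_{ij}=R$ for $i\ge j$. $\mathscr{A}(R,\mathbf{I}):=\bigoplus_{1\le i,j\le d}X_{ij}$, $X_{ij}:=I_{ij}/I_{i,d+1}$, with multiplication $(x+I_{i,d+1})(y+I_{k,d+1})=\delta_{jk}(xy+I_{i,d+1})\in X_{il}$ for $x\in I_{ij},y\in I_{kl}$. The dual system in $R^{\mathrm{op}}$ is $\mathring{I}_{ij}:=I_{d+2-j,d+2-i}$, so that the $(i,j)$ component of $B$ is $I_{d+2-j,d+2-i}/I_{1,d+2-i}$. Define $\mathbb{T}_{kl}:=R/I_{k,d+2-l}$ for $1\le k,l\le d$ and $\mathbb{T}:=\bigoplus_{k,l}\mathbb{T}_{kl}$. $A$ acts on $\mathbb{T}$ by $(x+I_{i,d+1})\cdot(r+I_{k,d+2-l})=\delta_{jk}(xr+I_{i,d+2-l})\in\mathbb{T}_{il}$ for $x\in I_{ij}$, $r\in R$; $B$ acts by $(x+I_{1,d+2-i})\cdot(r+I_{k,d+2-l})=\delta_{jl}(rx+I_{k,d+2-i})\in\mathbb{T}_{ki}$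 for $x\in I_{d+2-j,d+2-i}$, $r\in R$. These actions are well defined, commute, and are faithful. *)

(* Defs.v *)
From HB Require Import structures.
From mathcomp Require Import all_boot all_order all_algebra.
Set Implicit Arguments. Unset Strict Implicit. Unset Printing Implicit Defensive.
Import GRing.Theory.
Local Open Scope ring_scope.

(* Indices of ideals are 1-based natural numbers, as in the paper:
   I i j for 1 <= i, j <= d+1.  Matrix indices i : 'I_d are 0-based, so the
   paper's index of i : 'I_d is i.+1. *)

Section Defs.
Variable R : pzRingType.

Definition is_ideal (J : {pred R}) : Prop :=
  [/\ 0 \in J,
      (forall x y, x \in J -> y \in J -> x - y \in J) &
      (forall r x, x \in J -> r * x \in J /\ x * r \in J)].

(* d-system of ideals: I i j (1 <= i,j <= d+1) are two-sided ideals,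
   I_ij I_jk \subset I_ik (elementwise suffices since I_ik is additively
   closed), and I_ij = R for i >= j. *)
Definition dsystem (d : nat) (I : nat -> nat -> {pred R}) : Prop :=
  [/\ (forall i j, (1 <= i <= d.+1)%N -> (1 <= j <= d.+1)%N -> is_ideal (I i j)),
      (forall i j, (1 <= j <= i)%N -> (i <= d.+1)%N -> forall x, x \in I i j) &
      (forall i j k x y, (1 <= i <= d.+1)%N -> (1 <= j <= d.+1)%N ->
          (1 <= k <= d.+1)%N ->
          x \in I i j -> y \in I j k -> x * y \in I i k)].

(* T = (+)_{k,l} R / I_{k, d+2-l}.  An element of T is represented by a
   d x d matrix t of representatives (t k l represents the (k+1,l+1)
   component, living in R / I_{k+1, d+1-l}), up to the equivalence teq. *)
Definition teq (d : nat) (I : nat -> nat -> {pred R}) (t t' : 'M[R]_d) : Prop :=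
  forall k l : 'I_d, t k l - t' k l \in I k.+1 (d.+1 - l)%N.

(* Additive endomorphisms of T (End_Z(T)), represented by maps on
   representatives that respect teq and are additive modulo teq.
   Two such maps represent the same endomorphism iff they agree modulo teq
   at every point. *)
Definition zendo (d : nat) (I : nat -> nat -> {pred R}) (f : 'M[R]_d -> 'M[R]_d) : Prop :=
  (forall t t', teq I t t' -> teq I (f t) (f t')) /\
  (forall t t', teq I (f (t + t')) (f t + f t')).

(* A = A(R, I): element a = (a_ij) with a_ij \in I_{ij} (1-based), taken
   modulo I_{i,d+1}; we only need its representatives. *)
Definition inA (d : nat) (I : nat -> nat -> {pred R}) (a : 'M[R]_d) : Prop :=
  forall i j : 'I_d, a i j \in I i.+1 j.+1.

(* B = A(R^op, dual system): b_ij \in I_{d+2-j, d+2-i} (1-based), i.e. with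
   0-based i j : 'I_d, b i j \in I_{d+1-j, d+1-i}; taken modulo I_{1,d+2-i}. *)
Definition inB (d : nat) (I : nat -> nat -> {pred R}) (b : 'M[R]_d) : Prop :=
  forall i j : 'I_d, b i j \in I (d.+1 - j)%N (d.+1 - i)%N.

Definition actA (d : nat) (a t : 'M[R]_d) : 'M[R]_d :=
  \matrix_(i, l) \sum_j a i j * t j l.

(* Action of B on T: (b . t)_{ki} = sum_j t_kj b_ij  (mod I_{k,d+2-i}),
   i.e. x in B_ij sends r in T_kl to delta_jl (r x) in T_ki. *)
Definition actB (d : nat) (b t : 'M[R]_d) : 'M[R]_d :=
  \matrix_(k, i) \sum_j t k j * b i j.

End Defs.

(* Main.v *)
Require Import Defs.
From HB Require Import structures.
From mathcomp Require Import all_boot all_order all_algebra.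
From mathcomp Require Import zify.
Local Open Scope ring_scope.
Import GRing.Theory.
Set Implicit Arguments. Unset Strict Implicit. Unset Printing Implicit Defensive.

Section Ideal.
Variable R : pzRingType.
Variable J : {pred R}.
Hypothesis HJ : is_ideal J.
Lemma J0 : 0 \in J. Proof. by case: HJ. Qed.
Lemma JB x y : x \in J -> y \in J -> x - y \in J.
Proof. by case: HJ => _ H _; apply: H. Qed.
Lemma JN x : x \in J -> - x \in J.
Proof. move=> h; rewrite -sub0r; apply: JB => //; exact: J0. Qed.
Lemma JD x y : x \in J -> y \in J -> x + y \in J.
Proof. move=> hx hy; rewrite -[y]opprK; exact: JB hx (JN hy). Qed.
Lemma JMl r x : x \in J -> r * x \in J.
Proof. by case: HJ => _ _ H /(H r) []. Qed.
Lemma JMr r x : x \in J -> x * r \in J.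
Proof. by case: HJ => _ _ H /(H r) []. Qed.
Lemma Jsum (T : finType) (F : T -> R) : (forall i, F i \in J) -> \sum_i F i \in J.
Proof. move=> h; apply: (big_ind (fun x => x \in J)) => //; [exact: J0 | exact: JD]. Qed.
End Ideal.

Section Main.
Variable R : pzRingType.
Variable d : nat.
Variable I : nat -> nat -> {pred R}.
Hypothesis HI : dsystem d I.

Lemma idI i j : (1 <= i <= d.+1)%N -> (1 <= j <= d.+1)%N -> is_ideal (I i j).
Proof. by case: HI => H _ _; apply: H. Qed.
Lemma fullI i j x : (1 <= j <= i)%N -> (i <= d.+1)%N -> x \in I i j.
Proof. by case: HI => _ H _ h1 h2; apply: H. Qed.
Lemma mulI i j k x y : (1 <= i <= d.+1)%N -> (1 <= j <= d.+1)%N ->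
  (1 <= k <= d.+1)%N -> x \in I i j -> y \in I j k -> x * y \in I i k.
Proof. by case: HI => _ _ H; apply: H. Qed.

Lemma idT (k l : 'I_d) : is_ideal (I k.+1 (d.+1 - l)).
Proof. apply: idI; have := ltn_ord k; have := ltn_ord l; lia. Qed.

Lemma J0I i j : (1 <= i <= d.+1)%N -> (1 <= j <= d.+1)%N -> 0 \in I i j.
Proof. by move=> h1 h2; apply: J0; apply: idI. Qed.

Lemma sum_single (F : 'I_d -> R) o : (forall z, z != o -> F z = 0) -> \sum_z F z = F o.
Proof. move=> h; rewrite (bigD1 o) //= big1 ?addr0 // => z /h. Qed.

Lemma teq_refl (t : 'M[R]_d) : teq I t t.
Proof. move=> k l; rewrite subrr; exact: J0 (idT k l). Qed.
Lemma teq_sym (t t' : 'M[R]_d) : teq I t t' -> teq I t' t.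
Proof. move=> h k l; rewrite -opprB. by have := JN (idT k l) (h k l). Qed.
Lemma teq_trans (t1 t2 t3 : 'M[R]_d) : teq I t1 t2 -> teq I t2 t3 -> teq I t1 t3.
Proof.
move=> h1 h2 k l.
have -> : t1 k l - t3 k l = (t1 k l - t2 k l) + (t2 k l - t3 k l) by rewrite addrA subrK.
by have := JD (idT k l) (h1 k l) (h2 k l).
Qed.
Lemma teq_add (t1 t1' t2 t2' : 'M[R]_d) : teq I t1 t1' -> teq I t2 t2' -> teq I (t1 + t2) (t1' + t2').
Proof.
move=> h1 h2 k l; rewrite !mxE.
have -> : t1 k l + t2 k l - (t1' k l + t2' k l) = (t1 k l - t1' k l) + (t2 k l - t2' k l)
  by rewrite opprD addrACA.
by have := JD (idT k l) (h1 k l) (h2 k l).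
Qed.
Lemma teq_sum (F G : 'I_d -> 'M[R]_d) : (forall l, teq I (F l) (G l)) ->
  teq I (\sum_l F l) (\sum_l G l).
Proof.
move=> h; apply: (big_rec2 (fun x y => teq I x y)); first exact: teq_refl.
by move=> i x y _ hxy; apply: teq_add.
Qed.

Section F.
Variable f : 'M[R]_d -> 'M[R]_d.
Hypothesis Hf : zendo I f.
Lemma f_resp (t t' : 'M[R]_d) : teq I t t' -> teq I (f t) (f t').
Proof. by case: Hf => H _; apply: H. Qed.
Lemma f_add (t t' : 'M[R]_d) : teq I (f (t + t')) (f t + f t').
Proof. by case: Hf => _ H; apply: H. Qed.
Lemma f0 : teq I (f 0) 0.
Proof.
move=> k l; have := f_add 0 0 k l.
rewrite addr0 !mxE subr0 opprD addrA subrr add0r => /(JN (idT k l)).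
by rewrite opprK.
Qed.
Lemma f_sum (F : 'I_d -> 'M[R]_d) : teq I (f (\sum_l F l)) (\sum_l f (F l)).
Proof.
apply: (big_rec2 (fun x y => teq I (f x) y)); first exact: f0.
move=> i x y _ h; apply: teq_trans (f_add _ _) _.
apply: teq_add => //; exact: teq_refl.
Qed.
End F.

Lemma actA_resp (a t t' : 'M[R]_d) : inA I a -> teq I t t' -> teq I (actA a t) (actA a t').
Proof.
move=> ha h i l; rewrite !mxE -sumrB; apply: (Jsum (idT i l)) => j.
rewrite -mulrBr; apply: (mulI (j := j.+1)) => //.
- have := ltn_ord i; lia.
- have := ltn_ord j; lia.
- have := ltn_ord l; lia.
Qed.

Lemma actB_resp (b t t' : 'M[R]_d) : inB I b -> teq I t t' -> teq I (actB b t) (actB b t').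
Proof.
move=> hb h k i; rewrite !mxE -sumrB; apply: (Jsum (idT k i)) => j.
rewrite -mulrBl; apply: (mulI (j := (d.+1 - j)%N)) => //.
- have := ltn_ord k; lia.
- have := ltn_ord j; lia.
- have := ltn_ord i; lia.
Qed.

Lemma actAB (a b t : 'M[R]_d) : actA a (actB b t) = actB b (actA a t).
Proof.
apply/matrixP => i l; rewrite !mxE.
under eq_bigr do rewrite mxE big_distrr.
rewrite exchange_big /=; apply: eq_bigr => m _.
rewrite mxE big_distrl; apply: eq_bigr => j _ /=.
by rewrite mulrA.
Qed.

Section Hard.
Variable f : 'M[R]_d -> 'M[R]_d.
Hypothesis Hf : zendo I f.
Variable o : 'I_d.
Hypothesis ho : nat_of_ord o = 0%N.

Lemma hardA :
  (forall a, inA I a -> forall t, teq I (f (actA a t)) (actA a (f t))) ->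
  exists b, inB I b /\ forall t, teq I (f t) (actB b t).
Proof.
move=> Hc.
pose u (l : 'I_d) : 'M[R]_d := \matrix_(i, j) (if (i == o) && (j == l) then 1 else 0).
exists (\matrix_(i, j) f (u j) o i); split.
- move=> i j; rewrite mxE.
  have [j0|jpos] := eqVneq (nat_of_ord j) 0%N.
    rewrite j0 subn0; apply: fullI; have := ltn_ord i; lia.
  have hk : (d - j < d)%N by have := ltn_ord j; lia.
  pose k := Ordinal hk.
  have kE : nat_of_ord k = (d - j)%N by [].
  pose a : 'M[R]_d := \matrix_(x, y) (if (x == k) && (y == o) then 1 else 0).
  have ha : inA I a.
    move=> x y; rewrite mxE; case: andP => [[/eqP -> /eqP ->]|_].
      apply: fullI; have := ltn_ord j; lia.
    apply: J0; apply: idI; have := ltn_ord x; have := ltn_ord y; lia.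
  have h0 : teq I (actA a (u j)) 0.
    move=> x y; rewrite !mxE subr0; apply: (Jsum (idT x y)) => z; rewrite !mxE.
    case: (x =P k) => [->|_]; last by rewrite mul0r; apply: J0 (idT _ _).
    case: (z == o); last by rewrite andbF mul0r; apply: J0I; have := ltn_ord y; have := ltn_ord j; lia.
    rewrite ?eqxx /=; case: (y =P j) => [->|_]; last first.
      rewrite mulr0; apply: J0I; have := ltn_ord y; have := ltn_ord j; lia.
    rewrite mulr1 /=; apply: fullI; have := ltn_ord j; lia.
  have h1 : teq I (actA a (f (u j))) 0.
    apply: teq_trans (teq_sym (Hc a ha (u j))) _.
    exact: teq_trans (f_resp Hf h0) (f0 Hf).
  have := h1 k i; rewrite !mxE subr0 (sum_single (o:=o)); last first.
    by move=> z zo; rewrite !mxE (negbTE zo) andbF mul0r.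
  rewrite !mxE !eqxx /= mul1r.
  have -> : (k.+1 = d.+1 - j)%N by rewrite /=; have := ltn_ord j; lia.
  done.
- move=> t.
  pose aa (l : 'I_d) : 'M[R]_d := \matrix_(i, j) (if j == o then t i l else 0).
  have haa l : inA I (aa l).
    move=> x y; rewrite mxE; case: eqP => [->|_].
      apply: fullI; have := ltn_ord x; lia.
    apply: J0; apply: idI; have := ltn_ord x; have := ltn_ord y; lia.
  have et : t = \sum_l actA (aa l) (u l).
    apply/matrixP => i m; rewrite summxE (sum_single (o:=m)).
      rewrite mxE (sum_single (o:=o)); first by rewrite !mxE !eqxx mulr1.
      by move=> z zo; rewrite !mxE (negbTE zo) mul0r.
    move=> l lm; rewrite mxE big1 // => z _; rewrite !mxE.
    case: (m =P l) => [ml|_]; [by rewrite ml eqxx in lm | by rewrite andbF mulr0].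
  rewrite {1}et; apply: teq_trans (f_sum Hf _) _.
  apply: teq_trans (teq_sum (fun l => Hc _ (haa l) (u l))) _.
  have -> : \sum_l actA (aa l) (f (u l)) = actB (\matrix_(i, j) f (u j) o i) t.
    apply/matrixP => i m; rewrite summxE mxE; apply: eq_bigr => l _.
    rewrite !mxE (sum_single (o:=o)); first by rewrite !mxE eqxx.
    by move=> z zo; rewrite !mxE (negbTE zo) mul0r.
  exact: teq_refl.
Qed.

Lemma hardB :
  (forall b, inB I b -> forall t, teq I (f (actB b t)) (actB b (f t))) ->
  exists a, inA I a /\ forall t, teq I (f t) (actA a t).
Proof.
move=> Hc.
pose v (k : 'I_d) : 'M[R]_d := \matrix_(x, y) (if (x == k) && (y == o) then 1 else 0).
exists (\matrix_(x, k) f (v k) x o); split.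
- move=> x k; rewrite mxE.
  have [k0|kpos] := eqVneq (nat_of_ord k) 0%N.
    rewrite k0; apply: fullI; have := ltn_ord x; lia.
  have hj : (d - k < d)%N by have := ltn_ord k; lia.
  pose j' := Ordinal hj.
  have jE : nat_of_ord j' = (d - k)%N by [].
  pose bb : 'M[R]_d := \matrix_(p, q) (if (p == j') && (q == o) then 1 else 0).
  have hb : inB I bb.
    move=> p q; rewrite mxE; case: andP => [[/eqP -> /eqP ->]|_].
      apply: fullI; have := ltn_ord k; lia.
    apply: J0; apply: idI; have := ltn_ord p; have := ltn_ord q; lia.
  have h0 : teq I (actB bb (v k)) 0.
    move=> p y; rewrite !mxE subr0; apply: (Jsum (idT p y)) => z; rewrite !mxE.
    case: (p =P k) => [->|_]; last by rewrite mul0r; apply: J0 (idT _ _).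
    case: (z == o); last by rewrite andbF mul0r; apply: J0I; have := ltn_ord y; have := ltn_ord k; lia.
    rewrite ?eqxx /=; case: (y =P j') => [->|_]; last first.
      rewrite mulr0; apply: J0I; have := ltn_ord y; have := ltn_ord k; lia.
    rewrite mulr1 /=; apply: fullI; have := ltn_ord k; lia.
  have h1 : teq I (actB bb (f (v k))) 0.
    apply: teq_trans (teq_sym (Hc bb hb (v k))) _.
    exact: teq_trans (f_resp Hf h0) (f0 Hf).
  have := h1 x j'; rewrite !mxE subr0 (sum_single (o:=o)); last first.
    by move=> z zo; rewrite !mxE (negbTE zo) andbF mulr0.
  rewrite !mxE !eqxx /= mulr1.
  have -> : (d.+1 - (d - k) = k.+1)%N by have := ltn_ord k; lia.
  done.
- move=> t.
  pose bk (k : 'I_d) : 'M[R]_d := \matrix_(i, j) (if j == o then t k i else 0).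
  have hbk k : inB I (bk k).
    move=> x y; rewrite mxE; case: eqP => [->|_].
      apply: fullI; have := ltn_ord x; lia.
    apply: J0; apply: idI; have := ltn_ord x; have := ltn_ord y; lia.
  have et : t = \sum_k actB (bk k) (v k).
    apply/matrixP => x i; rewrite summxE (sum_single (o:=x)).
      rewrite mxE (sum_single (o:=o)); first by rewrite !mxE !eqxx mul1r.
      by move=> z zo; rewrite !mxE (negbTE zo) andbF mul0r.
    move=> k kx; rewrite mxE big1 // => z _; rewrite !mxE.
    by rewrite eq_sym (negbTE kx) mul0r.
  rewrite {1}et; apply: teq_trans (f_sum Hf _) _.
  apply: teq_trans (teq_sum (fun k => Hc _ (hbk k) (v k))) _.
  have -> : \sum_k actB (bk k) (f (v k)) = actA (\matrix_(x, k) f (v k) x o) t.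
    apply/matrixP => x i; rewrite summxE mxE; apply: eq_bigr => k _.
    rewrite !mxE (sum_single (o:=o)); first by rewrite !mxE eqxx.
    by move=> z zo; rewrite !mxE (negbTE zo) mulr0.
  exact: teq_refl.
Qed.
End Hard.

Lemma easyA (f : 'M[R]_d -> 'M[R]_d) :
  (exists b, inB I b /\ forall t, teq I (f t) (actB b t)) ->
  (forall a, inA I a -> forall t, teq I (f (actA a t)) (actA a (f t))).
Proof.
move=> [b [hb Hb]] a ha t; apply: teq_trans (Hb _) _.
rewrite -actAB; exact: actA_resp ha (teq_sym (Hb t)).
Qed.

Lemma easyB (f : 'M[R]_d -> 'M[R]_d) :
  (exists a, inA I a /\ forall t, teq I (f t) (actA a t)) ->
  (forall b, inB I b -> forall t, teq I (f (actB b t)) (actB b (f t))).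
Proof.
move=> [a [ha Ha]] b hb t; apply: teq_trans (Ha _) _.
rewrite actAB; exact: actB_resp hb (teq_sym (Ha t)).
Qed.

End Main.


Theorem proposition4p2 (R : pzRingType) (d : nat) (I : nat -> nat -> {pred R}) :
  dsystem d I ->
  (forall f : 'M[R]_d -> 'M[R]_d, zendo I f ->
     ((forall a, inA I a -> forall t, teq I (f (actA a t)) (actA a (f t))) <->
      (exists b, inB I b /\ forall t, teq I (f t) (actB b t))))
  /\
  (forall f : 'M[R]_d -> 'M[R]_d, zendo I f ->
     ((forall b, inB I b -> forall t, teq I (f (actB b t)) (actB b (f t))) <->
      (exists a, inA I a /\ forall t, teq I (f t) (actA a t)))).
Proof.
move=> HI; split=> f Hf; split; try exact: easyA; try exact: easyB.
- case: d I HI f Hf => [|n] I HI f Hf Hc.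
    by exists 0; split; [move=> [? ?] | move=> t [? ?]].
  exact: (hardA HI Hf (o := ord0)).
- case: d I HI f Hf => [|n] I HI f Hf Hc.
    by exists 0; split; [move=> [? ?] | move=> t [? ?]].
  exact: (hardB HI Hf (o := ord0)).
Qed.
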